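(* For any finite nonsolvable group $G$, there exists a finite non-abelian simple group $H$ with $|\mathrm{Solv}(G)| \geq |\mathrm{Solv}(H)|$.
   Context: For a finite group $G$ and $x \in G$, the solvabilizer of $x$ in $G$ is $\mathrm{Sol}_G(x) = \{y \in G : \langle x, y \rangle \text{ is solvable}\}$. $\mathrm{Solv}(G) = \{\mathrm{Sol}_G(x) : x \in G\}$ is the set of distinct solvabilizers of elements of $G$. *)

(* Defs.v *)
From mathcomp Require Import all_boot all_fingroup all_solvable.
Set Implicit Arguments. Unset Strict Implicit. Unset Printing Implicit Defensive.
Local Open Scope group_scope.

Definition solvabilizer (gT : finGroupType) (G : {set gT}) (x : gT) : {set gT} :=
  [set y in G | solvable <<[set x; y]>>].

Definition Solv (gT : finGroupType) (G : {set gT}) : {set {set gT}} :=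
  [set solvabilizer G x | x in G].

(* Main.v *)
Require Import Defs.
From mathcomp Require Import all_boot all_fingroup all_solvable.

Local Open Scope group_scope.

Lemma solvabilizer_sub (gT : finGroupType) (K G : {group gT}) x :
  K \subset G -> solvabilizer K x = solvabilizer G x :&: K.
Proof.
move=> sKG; apply/setP=> y; rewrite !inE.
case yK: (y \in K); last by rewrite andbF.
by rewrite (subsetP sKG y yK) andbT.
Qed.

Lemma card_Solv_sub (gT : finGroupType) (K G : {group gT}) :
  K \subset G -> #|Solv K| <= #|Solv G|.
Proof.
move=> sKG.
have sub: Solv K \subset (fun S => S :&: K) @: Solv G.
  apply/subsetP=> S /imsetP[x xK ->].
  apply/imsetP; exists (solvabilizer G x); last exact: solvabilizer_sub.
  by apply/imsetP; exists x => //; apply: (subsetP sKG).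
exact: leq_trans (subset_leq_card sub) (leq_imset_card _ _).
Qed.

Lemma quo_gen2 (gT : finGroupType) (N : {group gT}) x y :
  x \in 'N(N) -> y \in 'N(N) ->
  <<[set x; y]>> / N = <<[set coset N x; coset N y]>>.
Proof.
move=> xN yN; rewrite quotient_gen; last first.
  by apply/subsetP=> z /set2P[]->.
by rewrite quotientU !quotient_set1.
Qed.

Theorem lemma5p2 (gT : finGroupType) (G : {group gT}) :
  ~~ solvable G ->
  exists (hT : finGroupType) (H : {group hT}),
    [/\ simple H, ~~ abelian H & #|Solv H| <= #|Solv G|].
Proof.
move=> nsolG.
have [K minK sKG] := mingroup_exists (gP := fun M => ~~ solvable M) nsolG.
case/mingroupP: minK => nsolK minK.
have ntK : K :!=: 1.
  by apply: contra nsolK => /eqP->; apply: abelian_sol; apply: abelian1.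
have [N maxN] := ex_maxnormal_ntrivg ntK.
have nsNK := maxnormal_normal maxN.
have nNK := normal_norm nsNK.
have simH : simple (K / N) by rewrite quotient_simple.
have nsolH : ~~ solvable (K / N).
  apply: contra nsolK => solH.
  rewrite (series_sol nsNK) solH andbT.
  apply/negPn/negP => nsolN.
  have := minK N nsolN (maxnormal_sub maxN).
  move: (maxnormal_proper maxN); rewrite properE => /andP[_ /negP nKN] eNK.
  by apply: nKN; rewrite eNK.
have key : forall x y, x \in K -> y \in K ->
    solvable <<[set coset N x; coset N y]>> = solvable <<[set x; y]>>.
  move=> x y xK yK; rewrite -quo_gen2 ?(subsetP nNK) //.
  have sXK : <<[set x; y]>> \subset K.
    by rewrite gen_subG; apply/subsetP=> z; rewrite !inE => /orP[]/eqP->.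
  case: (eqVneq <<[set x; y]>> K) => [-> | neK].
    by rewrite (negbTE nsolH) (negbTE nsolK).
  have solX : solvable <<[set x; y]>>.
    apply/negPn/negP => nsolX.
    by move: neK; rewrite (minK <<[set x; y]>>%G nsolX sXK) eqxx.
  by rewrite solX quotient_sol.
exists (coset_of N), (K / N)%G; split=> //.
  by apply: contra nsolH; apply: abelian_sol.
apply: (leq_trans _ (@card_Solv_sub _ _ _ sKG)).
have sub: Solv (K / N) \subset (fun S : {set gT} => coset N @: S) @: Solv K.
  apply/subsetP=> S /imsetP[u uH ->].
  case/morphimP: uH => x _ xK ->.
  apply/imsetP; exists (solvabilizer K x); first by apply/imsetP; exists x.
  apply/setP=> v; apply/idP/idP.
    rewrite inE => /andP[vH solv].
    case/morphimP: vH => y _ yK vE.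
    apply/imsetP; exists y => //.
    by rewrite inE yK -key // -vE.
  case/imsetP=> y; rewrite inE => /andP[yK soly] ->.
  by rewrite inE mem_quotient //= key.
exact: leq_trans (subset_leq_card sub) (leq_imset_card _ _).
Qed.
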